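(* Let $k\ge3$. Let $G=(V,E)$ be a $(k-2)$-connected $k$-colorable chordal graph and let $T$ be a clique of $G$ with $T\ne V$, such that $(G,T)$ can be obtained from $(G-v,T\setminus\{v\})$ using an introduce operation. If $\mathcal{C}^c_k(G-v,T\setminus\{v\})$ is a $(k-2,k)$-color-complete graph, then $\mathcal{C}^c_k(G,T)$ is a $(k-1,k)$-color-complete graph. If $|T|=k$ or $\mathcal{C}^c_k(G-v,T\setminus\{v\})$ is a forest that satisfies the injective neighborhood property, then $\mathcal{C}^c_k(G,T)$ is a forest that satisfies the injective neighborhood property.
   Context: A chordal graph has no induced cycle of length $>3$; for $\ell\ge1$, $G$ is $\ell$-connected if $|V(G)|\ge\ell+1$ and every vertex cut has at least $\ell$ vertices. $(G,T)$ (a graph with $T\subseteq V(G)$) is obtained from $(G-v,T\setminus\{v\})$ by introducing $v$ if $T\ne V(G)$, $v\in T$ and $N(v)\subseteq T$. A $k$-coloring of $G$ is a map $\alpha:V(G)\to\{1,\dots,k\}$ with $\alpha(u)\ne\alpha(w)$ for all edges $uw$. $\mathcal{C}_k(G)$ has the $k$-colorings as nodes, adjacent iff they differ on exactly one vertex. For $T\subseteq V(G)$, label each coloring $\gamma$ by $\gamma|_T$. A label component is a maximal set of colorings with the same label inducing a connected subgraph of $\mathcal{C}_k(G)$. The contracted solution graph $\mathcal{C}^c_k(G,T)=(H,\ell)$ has one node $x$ per label component $S_x$, distinct $x,y$ adjacent iff some $\gamma\in S_x,\gamma'\in S_y$ are adjacent in $\mathcal{C}_k(G)$, and $\ell(x)$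 the common label on $S_x$. For $1\le m\le k$, a labeled graph $(H,\ell)$ is $(m,k)$-color-complete if there is a set $T$ with $|T|=m$ such that every label is a $k$-coloring of the complete graph on $T$, every such $k$-coloring is the label of exactly one node, and two nodes are adjacent iff their labels differ on exactly one element of $T$. $(H,\ell)$ satisfies the injective neighborhood property if any two distinct neighbors of any node have distinct labels. *)

(* Defs.v *)
From mathcomp Require Import all_boot.
Set Implicit Arguments. Unset Strict Implicit. Unset Printing Implicit Defensive.

(* A simple graph is given by a finite type V of potential vertices, a
   symmetric irreflexive relation e, and a vertex set W : {set V}
   (the graph is the induced graph G[W]). Using a vertex set lets us
   speak of G - v as (W :\ v). *)

Section Graphs.
Variables (V : finType) (e : rel V).

Definition restr (A : {set V}) : rel V := fun x y => [&& x \in A, y \in A & e x y].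

Definition is_vertex_cut (W S : {set V}) : Prop :=
  S \subset W /\
  exists x y, [/\ x \in W :\: S, y \in W :\: S & ~~ connect (restr (W :\: S)) x y].

Definition l_connected (l : nat) (W : {set V}) : Prop :=
  l.+1 <= #|W| /\ forall S, is_vertex_cut W S -> l <= #|S|.

Definition chordal (W : {set V}) : Prop :=
  forall s : seq V, uniq s -> {subset s <= W} -> 3 < size s -> cycle e s ->
  exists x y, [/\ x \in s, y \in s, e x y, y != next s x & y != prev s x].

Definition is_clique (W T : {set V}) : Prop :=
  T \subset W /\ {in T &, forall x y, x != y -> e x y}.

Definition introduce (W T : {set V}) (v : V) : Prop :=
  [/\ T != W, v \in T & {in W, forall u, e v u -> u \in T}].

(* A k-coloring of G[W] is a partial map V -> 'I_k with domain exactly W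
   (colors 0..k-1 stand for 1..k). *)
Definition pcol (k : nat) := {ffun V -> option 'I_k}.

Definition is_coloring (k : nat) (W : {set V}) (g : pcol k) : bool :=
  [forall x, (g x != None) == (x \in W)] &&
  [forall x, forall y, [&& x \in W, y \in W & e x y] ==> (g x != g y)].

Definition colorings (k : nat) (W : {set V}) : {set pcol k} :=
  [set g | is_coloring W g].

Definition col_adj (k : nat) (g g' : pcol k) : bool :=
  #|[set x | g x != g' x]| == 1.

Definition label (k : nat) (T : {set V}) (g : pcol k) : pcol k :=
  [ffun x => if x \in T then g x else None].

Definition lc_pre (k : nat) (W T : {set V}) (S : {set pcol k}) : Prop :=
  [/\ S != set0, S \subset colorings k W,
      {in S &, forall g g', label T g = label T g'} &
      {in S &, forall g g',
         connect (fun a b => [&& a \in S, b \in S & col_adj a b]) g g'}].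

Definition label_component (k : nat) (W T : {set V}) (S : {set pcol k}) : Prop :=
  lc_pre W T S /\ forall S' : {set pcol k}, S \subset S' -> lc_pre W T S' -> S' = S.

(* Contracted solution graph C^c_k(G[W],T): nodes, adjacency, labels *)
Definition CS_node (k : nat) (W T : {set V}) (x : {set pcol k}) : Prop :=
  label_component W T x.

Definition CS_adj (k : nat) (x y : {set pcol k}) : bool :=
  (x != y) && [exists g in x, exists g' in y, col_adj g g'].

Definition CS_lab (k : nat) (T : {set V}) (x : {set pcol k}) : pcol k :=
  match [pick g in x] with Some g => label T g | None => [ffun => None] end.

Definition Kcol (k : nat) (T' : {set V}) (f : pcol k) : Prop :=
  (forall t, (f t != None) = (t \in T')) /\ {in T' &, injective f}.

Definition color_complete (k : nat) (N : Type) (nodes : N -> Prop)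
    (adj : N -> N -> bool) (lab : N -> pcol k) (m : nat) : Prop :=
  exists T' : {set V},
    [/\ #|T'| = m,
        forall x, nodes x -> Kcol T' (lab x),
        forall f, Kcol T' f -> exists! x, nodes x /\ lab x = f &
        forall x y, nodes x -> nodes y ->
          (adj x y <-> #|[set t in T' | lab x t != lab y t]| = 1)].

End Graphs.

Definition forest (N : eqType) (nodes : N -> Prop) (adj : rel N) : Prop :=
  ~ exists s : seq N,
      [/\ uniq s, 3 <= size s, forall x, x \in s -> nodes x & cycle adj s].

Definition inj_nbhd (N : Type) (L : Type) (nodes : N -> Prop)
    (adj : N -> N -> bool) (lab : N -> L) : Prop :=
  forall x y z, nodes x -> nodes y -> nodes z -> adj x y -> adj x z ->
    y <> z -> lab y <> lab z.

(* Main.v *)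
Require Import Defs.
From mathcomp Require Import all_boot zify.
Set Implicit Arguments. Unset Strict Implicit. Unset Printing Implicit Defensive.

Lemma connect_map_inv (T1 T2 : finType) (r1 : rel T1) (r2 : rel T2)
  (P : T1 -> Prop) (F : T1 -> T2) :
  (forall a b, P a -> r1 a b -> P b /\ r2 (F a) (F b)) ->
  forall a b, P a -> connect r1 a b -> connect r2 (F a) (F b).
Proof.
move=> H a b Pa /connectP [p pth ->] {b}.
elim: p a Pa pth => [|c p IH] a Pa /=; first by rewrite connect0.
case/andP => r1ac pth; have [Pc r2ac] := H _ _ Pa r1ac.
apply: connect_trans (connect1 r2ac) _; exact: IH.
Qed.

Lemma col_adj_sym (V : finType) k (a b : pcol V k) : col_adj a b = col_adj b a.
Proof.
rewrite /col_adj; have -> // : [set x | a x != b x] = [set x | b x != a x].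
by apply/setP => x; rewrite !inE eq_sym.
Qed.

Lemma col_adjP (V : finType) k (a b : pcol V k) :
  col_adj a b -> exists u, a u != b u /\ forall x, x != u -> a x = b x.
Proof.
case/cards1P => u Hu; exists u; split.
  by have := set11 u; rewrite -Hu inE.
move=> x xu; apply/eqP; apply/negPn/negP => Hx.
have : x \in [set x | a x != b x] by rewrite inE Hx.
by rewrite Hu inE (negbTE xu).
Qed.

Lemma col_adjI (V : finType) k (a b : pcol V k) u :
  a u != b u -> (forall x, x != u -> a x = b x) -> col_adj a b.
Proof.
move=> Hu Hx; apply/cards1P; exists u; apply/setP => x; rewrite !inE.
by case: (eqVneq x u) => [->//|/Hx ->]; rewrite eqxx.
Qed.

Definition Rl (V : finType) (e : rel V) k (W T : {set V}) : rel (pcol V k) :=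
  fun a b => [&& a \in colorings e k W, b \in colorings e k W,
                 label T a == label T b & col_adj a b].

Definition lcomp (V : finType) (e : rel V) k (W T : {set V}) (g : pcol V k)
  : {set pcol V k} := [set h | connect (Rl e W T) g h].


Lemma Rl_sym (V : finType) (e : rel V) k (W T : {set V}) : symmetric (@Rl V e k W T).
Proof.
move=> a b; rewrite /Rl col_adj_sym eq_sym.
by case: (a \in _); case: (b \in _).
Qed.

Lemma connect_Rl_inv (V : finType) (e : rel V) k (W T : {set V}) (a b : pcol V k) :
  connect (Rl e W T) a b -> a \in colorings e k W ->
  b \in colorings e k W /\ label T b = label T a.
Proof.
move=> /connectP [p pth ->] {b}.
elim: p a pth => [|c p IH] a /=; first by [].
case/andP => /and4P [_ cc /eqP lac _] pth ca.
have [H1 H2] := IH c pth cc; split=> //; by rewrite H2.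
Qed.

Lemma lc_sub (V : finType) (e : rel V) k (W T : {set V}) (S : {set pcol V k}) g :
  lc_pre e W T S -> g \in S -> S \subset lcomp e W T g.
Proof.
case=> _ Ssub Slab Scon gS; apply/subsetP => h hS; rewrite inE.
have := Scon _ _ gS hS.
apply: (@connect_map_inv _ _ _ _ (fun a => a \in S) id) => // a b aS.
case/and3P => _ bS ab; split => //.
rewrite /Rl (subsetP Ssub _ aS) (subsetP Ssub _ bS) ab (Slab _ _ aS bS).
by rewrite eqxx.
Qed.

Lemma comp_mem (V : finType) (e : rel V) k (W T : {set V}) (g : pcol V k) :
  g \in lcomp e W T g.
Proof. by rewrite inE connect0. Qed.

Lemma comp_inv (V : finType) (e : rel V) k (W T : {set V}) (g h : pcol V k) :
  g \in colorings e k W -> h \in lcomp e W T g ->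
  h \in colorings e k W /\ label T h = label T g.
Proof. by move=> gc; rewrite inE => /connect_Rl_inv; apply. Qed.

Lemma comp_eq (V : finType) (e : rel V) k (W T : {set V}) (g h : pcol V k) :
  connect (Rl e W T) g h -> lcomp e W T g = lcomp e W T h.
Proof.
move=> gh; apply/setP => x; rewrite !inE.
by rewrite (same_connect (sym_connect_sym (@Rl_sym V e k W T)) gh).
Qed.

Lemma comp_eq_mem (V : finType) (e : rel V) k (W T : {set V}) (g h : pcol V k) :
  h \in lcomp e W T g -> lcomp e W T g = lcomp e W T h.
Proof. by rewrite inE => /comp_eq. Qed.

Lemma comp_node (V : finType) (e : rel V) k (W T : {set V}) (g : pcol V k) :
  g \in colorings e k W -> CS_node e W T (lcomp e W T g).
Proof.
move=> gc.
have Hpre : lc_pre e W T (lcomp e W T g).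
  split.
  - by apply/set0Pn; exists g; apply: comp_mem.
  - by apply/subsetP => h /(comp_inv gc) [].
  - by move=> a b /(comp_inv gc) [_ ->] /(comp_inv gc) [_ ->].
  - move=> a b ain bin.
    have ab : connect (Rl e W T) a b.
      rewrite (comp_eq_mem ain) in bin; by rewrite inE in bin.
    move: ab; apply: (@connect_map_inv _ _ _ _ (fun x => x \in lcomp e W T g) id) => //.
    move=> x y xin xy; have yin : y \in lcomp e W T g.
      by rewrite (comp_eq_mem xin) inE connect1.
    split => //=; rewrite xin yin /=; by case/and4P: xy.
split => // S' sub pre; apply/eqP; rewrite eqEsubset sub andbT.
apply: lc_sub pre _; exact: (subsetP sub _ (comp_mem _ _ _ _)).
Qed.

Lemma node_comp (V : finType) (e : rel V) k (W T : {set V}) (S : {set pcol V k}) g :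
  CS_node e W T S -> g \in S -> S = lcomp e W T g.
Proof.
case=> pre max gS; have Sc : S \subset colorings e k W by case: pre.
have := comp_node T (subsetP Sc _ gS); case=> pre' _.
by symmetry; apply: max => //; apply: lc_sub.
Qed.

Lemma node_ex (V : finType) (e : rel V) k (W T : {set V}) (S : {set pcol V k}) :
  CS_node e W T S -> exists2 g, g \in colorings e k W & S = lcomp e W T g.
Proof.
move=> nS; have [[/set0Pn [g gS] Sc _ _] _] := nS.
by exists g; [exact: (subsetP Sc) | exact: node_comp].
Qed.

Lemma CS_lab_comp (V : finType) (e : rel V) k (W T : {set V}) (g : pcol V k) :
  g \in colorings e k W -> CS_lab T (lcomp e W T g) = label T g.
Proof.
move=> gc; rewrite /CS_lab; case: pickP => [h hin|/(_ g)]; last by rewrite comp_mem.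
by have [_ ->] := comp_inv gc hin.
Qed.

Lemma CS_adj_comp (V : finType) (e : rel V) k (W T : {set V}) (g h : pcol V k) :
  g \in colorings e k W -> h \in colorings e k W ->
  CS_adj (lcomp e W T g) (lcomp e W T h) ->
  exists g1 h1, [/\ g1 \in lcomp e W T g, h1 \in lcomp e W T h, col_adj g1 h1
                 & label T g != label T h].
Proof.
move=> gc hc /andP [ne /existsP [g1 /andP [g1in /existsP [h1 /andP [h1in adj]]]]].
exists g1, h1; split => //; apply: contra ne => /eqP Hl.
have [g1c lg] := comp_inv gc g1in; have [h1c lh] := comp_inv hc h1in.
rewrite (comp_eq_mem g1in) (comp_eq_mem h1in); apply/eqP; apply: comp_eq.
by apply: connect1; rewrite /Rl g1c h1c lg lh Hl eqxx adj.
Qed.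

Lemma col_dom (V : finType) (e : rel V) k (W : {set V}) (g : pcol V k) x :
  g \in colorings e k W -> (g x != None) = (x \in W).
Proof. by rewrite inE => /andP [/forallP /(_ x) /eqP]. Qed.

Lemma col_prop (V : finType) (e : rel V) k (W : {set V}) (g : pcol V k) x y :
  g \in colorings e k W -> x \in W -> y \in W -> e x y -> g x != g y.
Proof.
rewrite inE => /andP [_ /forallP /(_ x) /forallP /(_ y)] H xW yW exy.
by move: H; rewrite xW yW exy.
Qed.

Lemma col_build (V : finType) (e : rel V) k (W : {set V}) (g : pcol V k) :
  (forall x, (g x != None) = (x \in W)) ->
  (forall x y, x \in W -> y \in W -> e x y -> g x != g y) ->
  g \in colorings e k W.
Proof.
move=> H1 H2; rewrite inE; apply/andP; split; apply/forallP => x.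
  by rewrite H1.
apply/forallP => y; apply/implyP => /and3P [xW yW exy]; exact: H2.
Qed.

Lemma label_in (V : finType) k (T : {set V}) (g : pcol V k) x :
  x \in T -> label T g x = g x.
Proof. by rewrite /label ffunE => ->. Qed.

Lemma label_out (V : finType) k (T : {set V}) (g : pcol V k) x :
  x \notin T -> label T g x = None.
Proof. by rewrite /label ffunE => /negbTE ->. Qed.

Lemma label_dom (V : finType) (e : rel V) k (W T : {set V}) (g : pcol V k) t :
  g \in colorings e k W -> T \subset W -> (label T g t != None) = (t \in T).
Proof.
move=> gc TW; case tT: (t \in T).
  by rewrite label_in // (col_dom _ gc) (subsetP TW).
by rewrite label_out ?tT.
Qed.

Lemma col_inj (V : finType) (e : rel V) k (W T : {set V}) (g : pcol V k) :
  g \in colorings e k W -> is_clique e W T -> {in T &, injective g}.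
Proof.
move=> gc [TW cl] x y xT yT gxy; apply/eqP; apply/negPn/negP => nxy.
have := col_prop gc (subsetP TW _ xT) (subsetP TW _ yT) (cl _ _ xT yT nxy).
by rewrite gxy eqxx.
Qed.

Lemma adj_one (V : finType) (e : rel V) k (W T : {set V}) (g h : pcol V k) :
  g \in colorings e k W -> h \in colorings e k W ->
  CS_adj (lcomp e W T g) (lcomp e W T h) ->
  exists g1 h1 u, [/\ g1 \in lcomp e W T g, h1 \in lcomp e W T h,
     g1 u != h1 u, (forall x, x != u -> g1 x = h1 x) &
     [set t in T | label T g t != label T h t] = [set u]].
Proof.
move=> gc hc /(CS_adj_comp gc hc) [g1 [h1 [g1in h1in /col_adjP [u [Hu Hx]] nl]]].
have [_ lg] := comp_inv gc g1in; have [_ lh] := comp_inv hc h1in.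
set D := [set t in T | label T g t != label T h t].
have sub : D \subset [set u].
  apply/subsetP => t; rewrite !inE -lg -lh => /andP [tT].
  rewrite !label_in //; apply: contraR => /Hx ->; by rewrite eqxx.
have [t tin] : exists t, t \in D.
  apply/set0Pn; apply: contra nl => /eqP D0; apply/eqP/ffunP => x.
  case xT: (x \in T); last by rewrite !label_out ?xT.
  apply/eqP; apply/negPn/negP => Hn.
  have : x \in D by rewrite inE xT Hn.
  by rewrite D0 inE.
have tu : t = u by move/subsetP: sub => /(_ _ tin); rewrite inE => /eqP.
exists g1, h1, u; split => //.
apply/eqP; rewrite eqEsubset sub; apply/subsetP => x; rewrite inE => /eqP ->.
by rewrite -tu.
Qed.

Definition rst (V : finType) k (v : V) (g : pcol V k) : pcol V k :=
  [ffun x => if x == v then None else g x].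
Definition extc (V : finType) k (v : V) (g : pcol V k) (c : option 'I_k) : pcol V k :=
  [ffun x => if x == v then c else g x].

Lemma restr_col (V : finType) (e : rel V) k (W : {set V}) v (g : pcol V k) :
  g \in colorings e k W -> rst v g \in colorings e k (W :\ v).
Proof.
move=> gc; apply: col_build => [x|x y]; rewrite /rst !ffunE !inE.
  by case: (x == v) => //=; rewrite (col_dom _ gc).
case/andP => xv xW /andP [yv yW] exy; rewrite (negbTE xv) (negbTE yv).
exact: col_prop gc xW yW exy.
Qed.

Lemma ext_col (V : finType) (e : rel V) k (W T : {set V}) v (a : pcol V k) c :
  symmetric e -> irreflexive e -> is_clique e W T -> introduce e W T v ->
  a \in colorings e k (W :\ v) -> c != None ->
  (forall t, t \in T :\ v -> a t != c) -> extc v a c \in colorings e k W.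
Proof.
move=> esym eirr [TW cl] [_ vT Nv] ac cN Ht.
have vW : v \in W by apply: (subsetP TW).
apply: col_build => [x|x y xW yW exy]; rewrite /extc !ffunE.
  case: (eqVneq x v) => [->|xv]; first by rewrite cN vW.
  by rewrite (col_dom _ ac) !inE xv.
case: (eqVneq x v) => [xv|xv]; case: (eqVneq y v) => [yv|yv].
- by move: exy; rewrite xv yv eirr.
- have yT : y \in T :\ v by rewrite !inE yv Nv // -xv.
  by rewrite eq_sym Ht.
- have xT : x \in T :\ v by rewrite !inE xv Nv // -yv esym.
  exact: Ht.
- by apply: col_prop ac _ _ exy; rewrite !inE ?xv ?yv.
Qed.

Lemma ext_restr (V : finType) k v (g : pcol V k) : extc v (rst v g) (g v) = g.
Proof. by apply/ffunP => x; rewrite !ffunE; case: eqP => // ->. Qed.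

Lemma label_ext (V : finType) k (T : {set V}) v (a : pcol V k) c :
  v \in T -> label T (extc v a c) = extc v (label (T :\ v) a) c.
Proof.
move=> vT; apply/ffunP => x; rewrite !ffunE !inE.
by case: (eqVneq x v) => [->|xv] //=; rewrite vT.
Qed.

Lemma label_restr (V : finType) k (T : {set V}) v (g : pcol V k) :
  label (T :\ v) (rst v g) = rst v (label T g).
Proof.
apply/ffunP => x; rewrite !ffunE !inE.
by case: (eqVneq x v) => [->|xv] //=; case: (x \in T).
Qed.

Lemma col_adj_ext (V : finType) k v (a b : pcol V k) c :
  col_adj a b -> a v = b v -> col_adj (extc v a c) (extc v b c).
Proof.
move=> /col_adjP [u [Hu Hx]] abv.
have uv : u != v by apply: contraNneq Hu => ->; rewrite abv.
apply: (@col_adjI _ _ _ _ u) => [|x xu]; rewrite !ffunE ?(negbTE uv) //.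
by case: (x == v) => //; rewrite Hx.
Qed.

Lemma col_adj_restr (V : finType) k v (a b : pcol V k) :
  col_adj a b -> a v = b v -> col_adj (rst v a) (rst v b).
Proof.
move=> /col_adjP [u [Hu Hx]] abv.
have uv : u != v by apply: contraNneq Hu => ->; rewrite abv.
apply: (@col_adjI _ _ _ _ u) => [|x xu]; rewrite !ffunE ?(negbTE uv) //.
by case: (x == v) => //; rewrite Hx.
Qed.

Lemma down (V : finType) (e : rel V) k (W T : {set V}) v (g h : pcol V k) :
  v \in T -> g \in colorings e k W -> connect (Rl e W T) g h ->
  connect (Rl e (W :\ v) (T :\ v)) (rst v g) (rst v h).
Proof.
move=> vT gc; apply: (@connect_map_inv _ _ _ _ (fun a => a \in colorings e k W)) => //.
move=> a b ac /and4P [_ bc /eqP lab adj]; split => //.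
rewrite /Rl !restr_col // !label_restr lab eqxx /=.
apply: col_adj_restr => //.
by rewrite -(label_in a vT) -(label_in b vT) lab.
Qed.

Definition rep (V : finType) k (X : {set pcol V k}) : pcol V k :=
  odflt [ffun => None] [pick g in X].

Definition psi (V : finType) (e : rel V) k (W T : {set V}) v (X : {set pcol V k}) :=
  lcomp e (W :\ v) (T :\ v) (rst v (rep X)).

Lemma rep_comp (V : finType) (e : rel V) k (W T : {set V}) (g : pcol V k) :
  rep (lcomp e W T g) \in lcomp e W T g.
Proof.
rewrite /rep; case: pickP => [h hin //|/(_ g)]; by rewrite comp_mem.
Qed.

Lemma psi_comp (V : finType) (e : rel V) k (W T : {set V}) v (g : pcol V k) :
  v \in T -> g \in colorings e k W ->
  psi e W T v (lcomp e W T g) = lcomp e (W :\ v) (T :\ v) (rst v g).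
Proof.
move=> vT gc; rewrite /psi; symmetry; apply: comp_eq; apply: down => //.
by have := rep_comp e W T g; rewrite inE.
Qed.

Lemma Fth (V : finType) (e : rel V) k (W T : {set V}) v (g h : pcol V k) :
  symmetric e -> irreflexive e -> is_clique e W T -> introduce e W T v ->
  g \in colorings e k W -> h \in colorings e k W ->
  lcomp e (W :\ v) (T :\ v) (rst v g) = lcomp e (W :\ v) (T :\ v) (rst v h) ->
  g v = h v -> lcomp e W T g = lcomp e W T h.
Proof.
move=> esym eirr cl intro gc hc Heq gvh.
have [TW clq] := cl; have [_ vT Nv] := intro.
have vW : v \in W by apply: (subsetP TW).
have rh : connect (Rl e (W :\ v) (T :\ v)) (rst v g) (rst v h).
  by have := comp_mem e (W :\ v) (T :\ v) (rst v h); rewrite -Heq inE.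
apply: comp_eq.
suff: connect (Rl e W T) (extc v (rst v g) (g v)) (extc v (rst v h) (h v)).
  by rewrite !ext_restr.
rewrite -gvh.
move: rh; apply: (@connect_map_inv _ _ _ _ (fun a => a \in colorings e k (W :\ v)
   /\ label (T :\ v) a = label (T :\ v) (rst v g)) (fun a => extc v a (g v))); last first.
  by split => //; apply: restr_col.
have gvN : g v != None by rewrite (col_dom _ gc).
have Hc : forall a, a \in colorings e k (W :\ v) ->
    label (T :\ v) a = label (T :\ v) (rst v g) -> extc v a (g v) \in colorings e k W.
  move=> a ac la; apply: (@ext_col _ _ _ W T) => // t tT.
  rewrite -(label_in a tT) la label_in // ffunE.
  move: tT; rewrite !inE => /andP [tv tT]; rewrite (negbTE tv).
  by apply: col_prop gc (subsetP TW _ tT) vW _; rewrite esym clq // eq_sym.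
move=> a b [ac la] /and4P [_ bc /eqP lab adj]; split; first by rewrite -lab.
rewrite /Rl !Hc // -?lab // !label_ext // lab eqxx /=.
apply: col_adj_ext => //.
move: (col_dom v ac) (col_dom v bc); rewrite !inE eqxx /= => /negbFE/eqP -> /negbFE/eqP ->. done.
Qed.

Lemma KcolN (V : finType) (e : rel V) k (W T : {set V}) (g : pcol V k) :
  is_clique e W T -> g \in colorings e k W -> Kcol T (label T g).
Proof.
move=> cl gc; have [TW _] := cl; split; first by move=> t; apply: label_dom gc TW.
move=> x y xT yT; rewrite !label_in //; exact: col_inj gc cl x y xT yT.
Qed.

Lemma clique_sub (V : finType) (e : rel V) (W T : {set V}) v :
  is_clique e W T -> is_clique e (W :\ v) (T :\ v).
Proof.
case=> TW cl; split; first by apply: setSD.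
by move=> x y; rewrite !inE => /andP [_ xT] /andP [_ yT]; apply: cl.
Qed.

Lemma part1 (V : finType) (e : rel V) (k : nat) (W T : {set V}) (v : V) :
  3 <= k -> symmetric e -> irreflexive e ->
  (exists g : pcol V k, g \in colorings e k W) ->
  is_clique e W T -> introduce e W T v ->
  color_complete (CS_node e (W :\ v) (T :\ v)) (@CS_adj V k)
       (CS_lab (T :\ v)) (k - 2) ->
  color_complete (CS_node e W T) (@CS_adj V k) (CS_lab T) (k - 1).
Proof.
move=> hk esym eirr [g0 g0c] cl intro [T0 [cT0 Hlab Huniq Hadj]].
have [TW clq] := cl; have [TneW vT Nv] := intro.
have cl' := clique_sub v cl; have [TW' _] := cl'.
have vW : v \in W by apply: (subsetP TW).
have T0E : T0 = T :\ v.
  have := Hlab _ (comp_node (T :\ v) (restr_col v g0c)).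
  rewrite CS_lab_comp; last exact: restr_col.
  case=> Hd _; apply/setP => t; rewrite -Hd; exact: label_dom (restr_col v g0c) TW'.
subst T0.
have cT : #|T| = k - 1.
  by move: (cardsD1 v T); rewrite vT cT0; lia.
have U : forall g h, g \in colorings e k W -> h \in colorings e k W ->
    label T g = label T h -> lcomp e W T g = lcomp e W T h.
  move=> g h gc hc lgh; apply: (@Fth _ _ _ W T v) => //.
  2: by rewrite -(label_in g vT) -(label_in h vT) lgh.
  have gn := comp_node (T :\ v) (restr_col v gc).
  have hn := comp_node (T :\ v) (restr_col v hc).
  have K := Hlab _ gn; rewrite CS_lab_comp in K; last exact: restr_col.
  have [x [_ xu]] := Huniq _ K.
  rewrite -(xu _ (conj gn _)); last by rewrite CS_lab_comp //; apply: restr_col.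
  apply: xu; split => //; rewrite !CS_lab_comp; try exact: restr_col.
  by rewrite !label_restr lgh.
exists T; split => //.
- move=> x /node_ex [g gc ->]; rewrite CS_lab_comp //; exact: KcolN cl gc.
- move=> f [fd finj].
  have K' : Kcol (T :\ v) (rst v f).
    split=> [t|x y]; rewrite ?ffunE !inE.
      by case: (eqVneq t v) => [->|tv] //=; rewrite fd.
    case/andP => /negbTE -> xT /andP [/negbTE -> yT]; exact: finj.
  have [x [[xn xl] _]] := Huniq _ K'.
  have [a ac xE] := node_ex xn; subst x; rewrite CS_lab_comp // in xl.
  have fvN : f v != None by rewrite fd.
  have gc : extc v a (f v) \in colorings e k W.
    apply: (@ext_col _ _ _ W T) => // t tT.
    rewrite -(label_in a tT) xl ffunE.
    move: tT; rewrite !inE => /andP [tv tT]; rewrite (negbTE tv).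
    by apply/eqP => /finj; move/(_ tT vT) => /eqP; rewrite (negbTE tv).
  have gl : label T (extc v a (f v)) = f by rewrite label_ext // xl ext_restr.
  exists (lcomp e W T (extc v a (f v))); split.
    by split; [exact: comp_node | rewrite CS_lab_comp].
  move=> y [/node_ex [h hc ->]]; rewrite CS_lab_comp // => hl.
  by apply: U => //; rewrite gl hl.
- move=> x y /node_ex [g gc ->] /node_ex [h hc ->]; rewrite !CS_lab_comp //.
  split.
    move/(adj_one gc hc) => [g1 [h1 [u [_ _ _ _ ->]]]]; exact: cards1.
  move/eqP/cards1P => [t0 Ht0].
  have Dl : forall t, t \in T -> t != t0 -> label T g t = label T h t.
    move=> t tT tt0; apply/eqP/negPn/negP => Hn.
    have : t \in [set t in T | label T g t != label T h t] by rewrite inE tT Hn.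
    by rewrite Ht0 inE (negbTE tt0).
  have t0in : t0 \in [set t in T | label T g t != label T h t] by rewrite Ht0 set11.
  have ne : lcomp e W T g != lcomp e W T h.
    move: t0in; rewrite inE => /andP [_]; apply: contra => /eqP E.
    by rewrite -(CS_lab_comp T gc) -(CS_lab_comp T hc) E.
  have ginj := col_inj gc cl; have hinj := col_inj hc cl.
  case: (eqVneq t0 v) => [t0v|t0v].
  +
    have hvN : h v != None by rewrite (col_dom _ hc).
    have Hgt : forall t, t \in T :\ v -> g t = h t.
      move=> t; rewrite !inE => /andP [tv tT].
      by rewrite -(label_in g tT) -(label_in h tT) Dl // t0v.
    have h'c : extc v (rst v g) (h v) \in colorings e k W.
      apply: (@ext_col _ _ _ W T) => //; first exact: restr_col.
      move=> t tT; rewrite ffunE; move: (tT); rewrite !inE => /andP [/negbTE -> tT'].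
      rewrite Hgt //; apply/eqP => /hinj; move/(_ tT' vT) => tv.
      by move: tT; rewrite tv !inE eqxx.
    have h'l : lcomp e W T (extc v (rst v g) (h v)) = lcomp e W T h.
      apply: U => //; apply/ffunP => z.
      rewrite label_ext // !ffunE !inE.
      case: (eqVneq z v) => [->|xv] /=; first by rewrite vT.
      case xT: (z \in T) => //; rewrite -(label_in g xT) -(label_in h xT) Dl // t0v //.
    rewrite /CS_adj ne /=; apply/existsP; exists g; rewrite comp_mem /=.
    apply/existsP; exists (extc v (rst v g) (h v)); rewrite -h'l comp_mem /=.
    apply: (@col_adjI _ _ _ _ v) => [|z zv].
      rewrite ffunE eqxx.
      by move: t0in; rewrite inE t0v !(label_in _ vT) => /andP [].
    by rewrite !ffunE (negbTE zv).
  +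
    have gvh : g v = h v by rewrite -(label_in g vT) -(label_in h vT) Dl // eq_sym.
    have gn := comp_node (T :\ v) (restr_col v gc).
    have hn := comp_node (T :\ v) (restr_col v hc).
    have Hold := proj2 (Hadj _ _ gn hn).
    have : CS_adj (lcomp e (W :\ v) (T :\ v) (rst v g))
                  (lcomp e (W :\ v) (T :\ v) (rst v h)).
      apply: Hold; rewrite !CS_lab_comp; try exact: restr_col.
      rewrite !label_restr.
      have -> : [set t in T :\ v | rst v (label T g) t != rst v (label T h) t]
                = [set t in T | label T g t != label T h t].
        apply/setP => t; rewrite !inE !ffunE.
        case: (eqVneq t v) => [->|tv] //=.
        by rewrite vT gvh eqxx.
      by rewrite Ht0 cards1.
    case/andP => _ /existsP [a /andP [ain /existsP [b /andP [bin ab]]]].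
    have [ac la] := comp_inv (restr_col v gc) ain.
    have [bc lb] := comp_inv (restr_col v hc) bin.
    have Hext : forall (a : pcol V k) (g : pcol V k), g \in colorings e k W ->
        a \in colorings e k (W :\ v) -> label (T :\ v) a = label (T :\ v) (rst v g) ->
        extc v a (g v) \in lcomp e W T g.
      move=> a' g' g'c a'c la'.
      have ec : extc v a' (g' v) \in colorings e k W.
        apply: (@ext_col _ _ _ W T) => //; first by rewrite (col_dom _ g'c).
        move=> t tT; rewrite -(label_in a' tT) la' label_restr !ffunE.
        move: tT; rewrite !inE => /andP [tv tT]; rewrite (negbTE tv) tT.
        by apply/eqP => /(col_inj g'c cl tT vT) E; rewrite E eqxx in tv.
      rewrite (U _ _ g'c ec); first exact: comp_mem.
      by rewrite label_ext // la' label_restr -(label_in g' vT) ext_restr.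
    rewrite /CS_adj ne /=; apply/existsP; exists (extc v a (g v)).
    rewrite Hext //=; apply/existsP; exists (extc v b (h v)); rewrite Hext //=.
    rewrite gvh; apply: col_adj_ext => //.
    move: (col_dom v ac) (col_dom v bc); rewrite !inE eqxx /=.
    by move=> /negbFE/eqP -> /negbFE/eqP ->.
Qed.

Lemma card_T_le (V : finType) (e : rel V) k (W T : {set V}) (g : pcol V k) :
  is_clique e W T -> g \in colorings e k W -> #|T| <= k.
Proof.
move=> cl gc; have [TW _] := cl.
have Hc := card_in_imset (col_inj gc cl).
have : [set g t | t in T] \subset ~: [set None].
  apply/subsetP => c /imsetP [t tT ->]; rewrite !inE (col_dom _ gc).
  exact: (subsetP TW).
move/subset_leq_card; rewrite Hc cardsC1 card_option card_ord //.
Qed.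

Lemma noadj (V : finType) (e : rel V) k (W T : {set V}) (x y : {set pcol V k}) :
  3 <= k -> is_clique e W T -> #|T| = k ->
  CS_node e W T x -> CS_node e W T y -> ~~ CS_adj x y.
Proof.
move=> hk cl cT /node_ex [g gc ->] /node_ex [h hc ->]; apply/negP.
move/(adj_one gc hc) => [g1 [h1 [u [g1in h1in Hu Hx HD]]]].
have [g1c _] := comp_inv gc g1in; have [h1c _] := comp_inv hc h1in.
have [TW _] := cl.
have uT : u \in T by have := set11 u; rewrite -HD inE => /andP [].
have := card_in_imset (col_inj g1c cl); rewrite cT => Hc.
have : [set g1 t | t in T] \subset ~: [set None; h1 u].
  apply/subsetP => c /imsetP [t tT ->]; rewrite !inE negb_or (col_dom _ g1c) (subsetP TW) //=.
  case: (eqVneq t u) => [->//|tu]; rewrite Hx //.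
  by apply/eqP => /(col_inj h1c cl tT uT) E; rewrite E eqxx in tu.
move/subset_leq_card; move: (cardsC [set None; h1 u]).
rewrite cards2 card_option card_ord Hc eq_sym (col_dom _ h1c) (subsetP TW) //=.
move=> H1 H2; have : k.+2 <= k.+1 by rewrite -[X in _ <= X]H1 -add2n leq_add2l.
by rewrite ltnn.
Qed.

Lemma card_T_ge (V : finType) (e : rel V) k (W T : {set V}) v :
  irreflexive e -> l_connected e (k - 2) W -> is_clique e W T -> introduce e W T v ->
  k - 2 <= #|T :\ v|.
Proof.
move=> eirr [_ Hcut] [TW cl] [TneW vT Nv]; apply: Hcut.
have [y yW yT] : exists2 y, y \in W & y \notin T.
  apply/exists_inP; apply: contraR TneW; rewrite negb_exists_in => /forall_inP H.
  rewrite eqEsubset TW /=; apply/subsetP => y yW; have := H y yW; by rewrite negbK.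
split; first by apply: subset_trans (subsetDl _ _) TW.
exists v, y; split.
- by rewrite !inE eqxx /= (subsetP TW).
- by rewrite !inE yW (negbTE yT) andbF.
apply/negP => /connectP [p pth yE].
case: p pth yE => [_ yv|z p] /=; first by move: yT; rewrite yv vT.
case/andP => /and3P [_ zin evz] _ _.
have zW : z \in W by move: zin; rewrite inE => /andP [].
have zT' := Nv _ zW evz.
have : z \notin T :\ v by move: zin; rewrite inE => /andP [].
rewrite !inE zT' andbT negbK => /eqP zeq.
by move: evz; rewrite zeq eirr.
Qed.

Lemma cyc_nbr (N : eqType) (adj : rel N) (s : seq N) n :
  uniq s -> 3 <= size s -> cycle adj s -> n \in s ->
  exists a b, [/\ a \in s, b \in s, a != b, a != n & b != n] /\ adj n a /\ adj b n.
Proof.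
move=> us ss cs /rot_to [i s' Hr].
have u' : uniq (n :: s') by rewrite -Hr rot_uniq.
have c' : cycle adj (n :: s') by rewrite -Hr rot_cycle.
have sz : size (n :: s') = size s by rewrite -Hr size_rot.
have mm : forall x, x \in n :: s' -> x \in s by move=> x; rewrite -Hr mem_rot.
case: s' Hr u' c' sz mm => [|a [|c t]] Hr u' c' sz mm; rewrite -?sz //= in ss.
exists a, (last c t); split; last first.
  move: c'; rewrite /cycle rcons_path /= => /andP [/andP [-> _] ->] //.
move: u' => /andP [nin /andP [ain _]].
have lt : last c t \in c :: t by apply: mem_last.
split.
- by apply: mm; rewrite !inE eqxx orbT.
- by apply: mm; rewrite inE; apply/orP; right; rewrite inE lt orbT.
- by apply: contraNneq ain => ->.
- by apply: contraNneq nin => ->; rewrite mem_head.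
- by apply: contraNneq nin => <-; rewrite inE lt orbT.
Qed.

Lemma leaf (N : finType) (nodes : N -> Prop) (adj : rel N) :
  symmetric adj -> irreflexive adj -> forest nodes adj ->
  forall S : {set N}, (forall x, x \in S -> nodes x) -> S != set0 ->
  exists2 X, X \in S & forall Y Y', Y \in S -> Y' \in S -> adj X Y -> adj X Y' -> Y = Y'.
Proof.
move=> asym airr hf S Sn S0.
case: (boolP [exists X in S, [forall Y in S, forall Y' in S,
                 adj X Y ==> adj X Y' ==> (Y == Y')]]).
  move/exists_inP => [X XS /forall_inP H]; exists X => // Y Y' YS Y'S aY aY'.
  by have /forall_inP /(_ Y' Y'S) /implyP /(_ aY) /implyP /(_ aY') /eqP := H Y YS.
rewrite negb_exists_in => /forall_inP Hn; exfalso.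
have nl : forall X, X \in S -> exists Y1 Y2,
    [/\ Y1 \in S, Y2 \in S, adj X Y1, adj X Y2 & Y1 != Y2].
  move=> X XS; have := Hn X XS; rewrite negb_forall_in => /exists_inP [Y YS].
  rewrite negb_forall_in => /exists_inP [Y' Y'S].
  rewrite negb_imply => /andP [aY]; rewrite negb_imply => /andP [aY' ne].
  by exists Y, Y'.
have long : forall n, exists x q, [/\ uniq (x :: q), {subset x :: q <= S},
                                   path adj x q & n <= size q].
  elim => [|n [x [q [u sub pth sz]]]].
    have /set0Pn [x xS] := S0; exists x, [::]; split => //.
    by move=> y; rewrite inE => /eqP ->.
  have [Y1 [Y2 [Y1S Y2S a1 a2 ne]]] := nl x (sub x (mem_head _ _)).
  have [Y [YS aY Yh]] : exists Y, [/\ Y \in S, adj x Y & Y != head x q].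
    case: (eqVneq Y1 (head x q)) => [E|H]; last by exists Y1.
    by exists Y2; split => //; rewrite -E eq_sym.
  have Yx : Y != x by apply: contraTneq aY => ->; rewrite airr.
  case: (boolP (Y \in x :: q)) => YIn; last first.
    exists Y, (x :: q); split => //=.
    - by rewrite YIn.
    - by move=> y; rewrite inE => /orP [/eqP ->|/sub].
    - by rewrite asym aY.
  case: q u sub pth sz Yh YIn => [|z q0] u sub pth sz Yh YIn.
    by move: YIn; rewrite inE (negbTE Yx).
  move: u sub pth; move: YIn; rewrite !inE (negbTE Yx) (negbTE Yh) /=.
  move=> /splitPr [q1 q2] u sub pth.
  case: hf; exists (x :: z :: rcons q1 Y); split.
  - have : uniq ((x :: z :: rcons q1 Y) ++ q2) by rewrite /= cat_rcons.
    by rewrite cat_uniq => /andP [].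
  - by rewrite /= size_rcons.
  - move=> y yin; apply: Sn; apply: sub.
    by move: yin; rewrite !inE mem_rcons inE mem_cat inE; case/or3P => [->|->|/orP [->|->]]; rewrite ?orbT.
  - rewrite /cycle rcons_path /= last_rcons (asym Y x) aY andbT.
    have : path adj x ((z :: rcons q1 Y) ++ q2) by rewrite cat_cons cat_rcons.
    by rewrite cat_path => /andP [H _].
have [x [q [u sub _ sz]]] := long #|S|.
have : size (x :: q) <= #|S|.
  rewrite cardE; apply: uniq_leq_size => // y /sub; by rewrite mem_enum.
by rewrite /= ltnNge sz.
Qed.

Lemma abstract_forest (N : finType) (nN nO : N -> Prop) (aN aO : rel N)
  (psi : N -> N) (C : eqType) (col : N -> C) :
  symmetric aN -> irreflexive aN -> symmetric aO -> irreflexive aO ->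
  (forall n, nN n -> nO (psi n)) ->
  (forall n m, nN n -> nN m -> aN n m -> psi n != psi m ->
     aO (psi n) (psi m) /\ col n = col m) ->
  (forall n m, nN n -> nN m -> psi n = psi m -> col n = col m -> n = m) ->
  (forall n1 n2 n3, nN n1 -> nN n2 -> nN n3 -> psi n1 = psi n2 -> psi n1 = psi n3 ->
     [|| n1 == n2, n1 == n3 | n2 == n3]) ->
  (forall n m n' m', nN n -> nN m -> nN n' -> nN m' -> aN n m -> aN n' m' ->
     psi n != psi m -> psi n' = psi n -> psi m' = psi m -> col n = col n') ->
  forest nO aO -> forest nN aN.
Proof.
move=> sN iN sO iO Ha Hb Hc H3 Hf hfO [s [us ss ns cs]].
pose S := [set psi n | n in s].
have Sn : forall X, X \in S -> nO X by move=> X /imsetP [n nin ->]; apply/Ha/ns.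
have [n1 n1s] : exists n, n \in s.
  by case: (s) ss => // n s' _; exists n; rewrite mem_head.
have S0 : S != set0 by apply/set0Pn; exists (psi n1); apply/imsetP; exists n1.
have [X XS Hleaf] := leaf sO iO hfO Sn S0.
have [n0 n0s X0] := imsetP XS.
have nb : forall n, n \in s -> exists a b,
    [/\ a \in s, b \in s, a != b, a != n & b != n] /\ aN n a /\ aN n b.
  move=> n ns'; have [a [b [[H1 H2 H3' H4 H5] [H6 H7]]]] := cyc_nbr us ss cs ns'.
  by exists a, b; split => //; split => //; rewrite sN.
have inS : forall n, n \in s -> psi n \in S by move=> n nin; apply/imsetP; exists n.
have [a [b [[as_ bs ab an bn] [na nb0]]]] := nb n0 n0s.
have cross : forall a b, a \in s -> b \in s -> a != b -> a != n0 -> b != n0 ->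
    aN n0 a -> aN n0 b -> psi a = X -> False.
  move=> a' b' a's b's a'b' a'n b'n na' nb' pa.
  have pb : psi b' != X.
    apply/eqP => pb; have := H3 _ _ _ (ns _ n0s) (ns _ a's) (ns _ b's).
    by rewrite -X0 pa pb eq_sym (negbTE a'n) eq_sym (negbTE b'n) (negbTE a'b'); move/(_ erefl erefl).
  have [c [d [[cs' ds cd ca da] [ac ad]]]] := nb a' a's.
  have [c' [c's c'a c'n ac']] : exists c', [/\ c' \in s, c' != a', c' != n0 & aN a' c'].
    case: (eqVneq c n0) => [cn|cn]; last by exists c.
    by exists d; split => //; rewrite -cn eq_sym.
  have pc : psi c' != X.
    apply/eqP => pc; have := H3 _ _ _ (ns _ n0s) (ns _ a's) (ns _ c's).
    rewrite -X0 pa pc eq_sym (negbTE a'n) eq_sym (negbTE c'n) eq_sym (negbTE c'a).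
    by move/(_ erefl erefl).
  have [o1 _] := Hb _ _ (ns _ n0s) (ns _ b's) nb' ltac:(by rewrite -X0 eq_sym).
  have [o2 _] := Hb _ _ (ns _ a's) (ns _ c's) ac' ltac:(by rewrite pa eq_sym).
  rewrite -X0 in o1; rewrite pa in o2.
  have E := Hleaf _ _ (inS _ b's) (inS _ c's) o1 o2.
  have := Hf _ _ _ _ (ns _ n0s) (ns _ b's) (ns _ a's) (ns _ c's) nb' ac'.
  move/(_ ltac:(by rewrite -X0 eq_sym) ltac:(by rewrite pa X0) (esym E)) => ce.
  have := Hc _ _ (ns _ n0s) (ns _ a's) ltac:(by rewrite pa X0) ce.
  by move=> E'; rewrite E' eqxx in a'n.
case: (eqVneq (psi a) X) => [pa|pa]; first exact: cross a b as_ bs ab an bn na nb0 pa.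
case: (eqVneq (psi b) X) => [pb|pb].
  by apply: (cross b a) => //; rewrite eq_sym.
have [o1 c1] := Hb _ _ (ns _ n0s) (ns _ as_) na ltac:(by rewrite -X0 eq_sym).
have [o2 c2] := Hb _ _ (ns _ n0s) (ns _ bs) nb0 ltac:(by rewrite -X0 eq_sym).
rewrite -X0 in o1 o2.
have E := Hleaf _ _ (inS _ as_) (inS _ bs) o1 o2.
have := Hc _ _ (ns _ as_) (ns _ bs) E ltac:(by rewrite -c1 -c2).
by move=> E'; rewrite E' eqxx in ab.
Qed.

Lemma abstract_inj (N : finType) (nN nO : N -> Prop) (aN aO : rel N)
  (psi : N -> N) (C : eqType) (col : N -> C) (L1 L2 : Type)
  (labN : N -> L1) (labO : N -> L2) :
  irreflexive aN ->
  (forall n m, nN n -> nN m -> aN n m -> psi n != psi m ->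
     aO (psi n) (psi m) /\ col n = col m) ->
  (forall n m, nN n -> nN m -> psi n = psi m -> col n = col m -> n = m) ->
  (forall n m, nN n -> nN m -> labN n = labN m ->
     col n = col m /\ labO (psi n) = labO (psi m)) ->
  (forall n, nN n -> nO (psi n)) ->
  inj_nbhd nO aO labO -> inj_nbhd nN aN labN.
Proof.
move=> iN Hb Hc Hd Ha hO x y z nx ny nz axy axz yz lyz.
have [cyz lo] := Hd _ _ ny nz lyz.
have pyz : psi y != psi z by apply/eqP => E; exact: yz (Hc _ _ ny nz E cyz).
case: (eqVneq (psi y) (psi x)) => [pyx|pyx].
  have pzx : psi x != psi z by rewrite -pyx.
  have [_ cxz] := Hb _ _ nx nz axz pzx.
  have := Hc _ _ nx ny (esym pyx) ltac:(by rewrite cxz cyz).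
  by move=> E; move: axy; rewrite E iN.
case: (eqVneq (psi z) (psi x)) => [pzx|pzx].
  have [_ cxy] := Hb _ _ nx ny axy ltac:(by rewrite eq_sym).
  have := Hc _ _ nx nz (esym pzx) ltac:(by rewrite cxy cyz).
  by move=> E; move: axz; rewrite E iN.
have [o1 _] := Hb _ _ nx ny axy ltac:(by rewrite eq_sym).
have [o2 _] := Hb _ _ nx nz axz ltac:(by rewrite eq_sym).
have pyz' : psi y <> psi z by apply/eqP.
exact: (hO _ _ _ (Ha _ nx) (Ha _ ny) (Ha _ nz) o1 o2 pyz') lo.
Qed.

Lemma CS_adj_sym (V : finType) k : symmetric (@CS_adj V k).
Proof.
move=> x y; rewrite /CS_adj eq_sym; congr (_ && _).
apply/existsP/existsP => [[g /andP [gx /existsP [h /andP [hy a]]]]|[g /andP [gx /existsP [h /andP [hy a]]]]];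
  exists h; rewrite hy /=; apply/existsP; exists g; by rewrite gx col_adj_sym.
Qed.

Lemma CS_adj_irr (V : finType) k : irreflexive (@CS_adj V k).
Proof. by move=> x; rewrite /CS_adj eqxx. Qed.

Lemma lab_on (V : finType) (e : rel V) k (W T : {set V}) v (g g' : pcol V k) :
  g \in colorings e k W -> g' \in colorings e k W ->
  lcomp e (W :\ v) (T :\ v) (rst v g) = lcomp e (W :\ v) (T :\ v) (rst v g') ->
  forall t, t \in T :\ v -> g t = g' t.
Proof.
move=> gc g'c E t tT.
have := congr1 (CS_lab (T :\ v)) E.
rewrite !CS_lab_comp; try (apply: restr_col; assumption).
move/ffunP/(_ t); rewrite !label_in // !ffunE.
by move: tT; rewrite !inE => /andP [/negbTE ->].
Qed.

Lemma notinC (V : finType) (e : rel V) k (W T : {set V}) v (g : pcol V k) :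
  is_clique e W T -> v \in T -> g \in colorings e k W ->
  g v \notin None |: [set g t | t in T :\ v].
Proof.
move=> cl vT gc; have [TW _] := cl.
rewrite !inE negb_or (col_dom _ gc) (subsetP TW) //=.
apply/imsetP => [[t tT E]]; move: tT; rewrite !inE => /andP [tv tT].
by have := col_inj gc cl vT tT E => vt; rewrite vt eqxx in tv.
Qed.

Lemma cardC (V : finType) (e : rel V) k (W T : {set V}) v (g : pcol V k) :
  is_clique e W T -> g \in colorings e k W ->
  #|None |: [set g t | t in T :\ v]| = #|T :\ v|.+1.
Proof.
move=> cl gc; have [TW _] := cl.
rewrite cardsU1 card_in_imset; last first.
  by move=> x y; rewrite !inE => /andP [_ xT] /andP [_ yT]; apply: (col_inj gc cl).
suff -> : None \notin [set g t | t in T :\ v] by [].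
apply/imsetP => [[t]]; rewrite !inE => /andP [_ tT] E.
by move: (col_dom t gc); rewrite -E eqxx (subsetP TW).
Qed.

Lemma cross (V : finType) (e : rel V) k (W T : {set V}) v (n m : {set pcol V k}) :
  is_clique e W T -> introduce e W T v ->
  CS_node e W T n -> CS_node e W T m -> CS_adj n m ->
  psi e W T v n != psi e W T v m ->
  exists g1 h1 u, [/\ g1 \in colorings e k W, h1 \in colorings e k W,
     n = lcomp e W T g1, m = lcomp e W T h1 &
     [/\ u \in T :\ v, g1 u != h1 u & forall x, x != u -> g1 x = h1 x]].
Proof.
move=> cl [_ vT _] /node_ex [g gc ->] /node_ex [h hc ->] adj.
have [g1 [h1 [u [g1in h1in Hu Hx HD]]]] := adj_one gc hc adj.
have [g1c _] := comp_inv gc g1in; have [h1c _] := comp_inv hc h1in.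
rewrite (comp_eq_mem g1in) (comp_eq_mem h1in) !psi_comp // => pne.
exists g1, h1, u; split => //; split => //.
have uT : u \in T by have := set11 u; rewrite -HD inE => /andP [].
rewrite !inE uT andbT; apply: contraNneq pne => uv.
suff -> : rst v g1 = rst v h1 by [].
apply/ffunP => x; rewrite !ffunE; case: (eqVneq x v) => // xv.
by rewrite Hx // uv.
Qed.

Lemma condb (V : finType) (e : rel V) k (W T : {set V}) v (n m : {set pcol V k}) :
  is_clique e W T -> introduce e W T v ->
  CS_node e W T n -> CS_node e W T m -> CS_adj n m ->
  psi e W T v n != psi e W T v m ->
  CS_adj (psi e W T v n) (psi e W T v m) /\ CS_lab T n v = CS_lab T m v.
Proof.
move=> cl intro nn nm adj pne.
have [g1 [h1 [u [g1c h1c En Em [uT Hu Hx]]]]] := cross cl intro nn nm adj pne.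
have [_ vT _] := intro.
have uv : u != v by move: uT; rewrite !inE => /andP [].
have gvh : g1 v = h1 v by rewrite Hx // eq_sym.
split; last by rewrite En Em !CS_lab_comp // !label_in.
rewrite /CS_adj pne /=; subst n m; rewrite !psi_comp //.
apply/existsP; exists (rst v g1); rewrite comp_mem /=.
apply/existsP; exists (rst v h1); rewrite comp_mem /=.
by apply: col_adj_restr => //; apply: (@col_adjI _ _ _ _ u).
Qed.

Lemma condc (V : finType) (e : rel V) k (W T : {set V}) v (n m : {set pcol V k}) :
  symmetric e -> irreflexive e -> is_clique e W T -> introduce e W T v ->
  CS_node e W T n -> CS_node e W T m ->
  psi e W T v n = psi e W T v m -> CS_lab T n v = CS_lab T m v -> n = m.
Proof.
move=> esym eirr cl intro /node_ex [g gc ->] /node_ex [h hc ->].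
have [_ vT _] := intro.
rewrite !psi_comp // !CS_lab_comp // !label_in // => E gvh.
exact: Fth E gvh.
Qed.

Lemma condd (V : finType) (e : rel V) k (W T : {set V}) v (n m : {set pcol V k}) :
  introduce e W T v ->
  CS_node e W T n -> CS_node e W T m -> CS_lab T n = CS_lab T m ->
  CS_lab T n v = CS_lab T m v /\
  CS_lab (T :\ v) (psi e W T v n) = CS_lab (T :\ v) (psi e W T v m).
Proof.
move=> intro /node_ex [g gc ->] /node_ex [h hc ->] E; split; first by rewrite E.
have [_ vT _] := intro.
move: E; rewrite !psi_comp // !CS_lab_comp //; try (apply: restr_col; assumption).
by rewrite !label_restr => ->.
Qed.

Lemma conda (V : finType) (e : rel V) k (W T : {set V}) v (n : {set pcol V k}) :
  introduce e W T v -> CS_node e W T n -> CS_node e (W :\ v) (T :\ v) (psi e W T v n).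
Proof.
move=> [_ vT _] /node_ex [g gc ->]; rewrite psi_comp //.
by apply: comp_node; apply: restr_col.
Qed.

Lemma NoneC (V : finType) (e : rel V) k (W T : {set V}) v (g : pcol V k) :
  T \subset W -> g \in colorings e k W -> None \notin [set g t | t in T :\ v].
Proof.
move=> TW gc; apply/imsetP => [[t]]; rewrite !inE => /andP [_ tT] E.
by move: (col_dom t gc); rewrite -E eqxx (subsetP TW).
Qed.

Lemma cond3 (V : finType) (e : rel V) k (W T : {set V}) v (n1 n2 n3 : {set pcol V k}) :
  symmetric e -> irreflexive e -> is_clique e W T -> introduce e W T v ->
  #|T :\ v| = k - 2 -> 3 <= k ->
  CS_node e W T n1 -> CS_node e W T n2 -> CS_node e W T n3 ->
  psi e W T v n1 = psi e W T v n2 -> psi e W T v n1 = psi e W T v n3 ->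
  [|| n1 == n2, n1 == n3 | n2 == n3].
Proof.
move=> esym eirr cl intro cT hk /node_ex [g1 g1c ->] /node_ex [g2 g2c ->] /node_ex [g3 g3c ->].
have [_ vT _] := intro.
rewrite !psi_comp // => E12 E13.
apply/negPn/negP; rewrite !negb_or => /and3P [d12 d13 d23].
have c12 : g1 v != g2 v by apply: contraNneq d12 => E; apply/eqP; exact: (@Fth _ _ _ W T v).
have c13 : g1 v != g3 v by apply: contraNneq d13 => E; apply/eqP; exact: (@Fth _ _ _ W T v).
have c23 : g2 v != g3 v.
  apply: contraNneq d23 => E; apply/eqP; apply: (@Fth _ _ _ W T v) => //; by rewrite -E12.
pose C := None |: [set g1 t | t in T :\ v].
have C2 : [set g2 t | t in T :\ v] = [set g1 t | t in T :\ v].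
  by apply: eq_in_imset => t tT; rewrite (lab_on g1c g2c E12).
have C3 : [set g3 t | t in T :\ v] = [set g1 t | t in T :\ v].
  by apply: eq_in_imset => t tT; rewrite (lab_on g1c g3c E13).
have n1C := notinC cl vT g1c; have n2C := notinC cl vT g2c; have n3C := notinC cl vT g3c.
rewrite C2 in n2C; rewrite C3 in n3C.
have sub : g1 v |: [set g2 v; g3 v] \subset ~: C.
  apply/subsetP => x; rewrite !inE => /or3P [] /eqP ->;
    [move: n1C|move: n2C|move: n3C]; by rewrite !inE.
have cC : #|C| = (k - 2).+1 by rewrite /C (cardC v cl g1c) cT.
move: (subset_leq_card sub) (cardsC C).
rewrite cardsU1 cards2 in_set2 negb_or c12 c13 c23 cC card_option card_ord.
move: #|~: C| => m H1 H2; rewrite /= in H1; clear -H1 H2; lia.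
Qed.

Lemma condf (V : finType) (e : rel V) k (W T : {set V}) v (n m n' m' : {set pcol V k}) :
  is_clique e W T -> introduce e W T v -> #|T :\ v| = k - 2 -> 3 <= k ->
  CS_node e W T n -> CS_node e W T m -> CS_node e W T n' -> CS_node e W T m' ->
  CS_adj n m -> CS_adj n' m' -> psi e W T v n != psi e W T v m ->
  psi e W T v n' = psi e W T v n -> psi e W T v m' = psi e W T v m ->
  CS_lab T n v = CS_lab T n' v.
Proof.
move=> cl intro cT hk nn nm nn' nm' a1 a2 pne E1 E2.
have [TW _] := cl; have [_ vT _] := intro.
have [g1 [h1 [u [g1c h1c En Em [uT Hu Hx]]]]] := cross cl intro nn nm a1 pne.
have pne' : psi e W T v n' != psi e W T v m' by rewrite E1 E2.
have [g2 [h2 [u' [g2c h2c En' Em' [uT2 Hu2 Hx2]]]]] := cross cl intro nn' nm' a2 pne'.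
subst n m n' m'; rewrite !psi_comp // in E1 E2 pne.
rewrite !CS_lab_comp // !label_in //.
have uv : u != v by move: uT; rewrite !inE => /andP [].
have uT' : u \in T by move: uT; rewrite !inE => /andP [].
pose Cg := [set g1 t | t in T :\ v]; pose Ch := [set h1 t | t in T :\ v].
pose U := None |: (Cg :|: Ch).
have nU : forall g h, g \in colorings e k W -> h \in colorings e k W ->
    lcomp e (W :\ v) (T :\ v) (rst v g) = lcomp e (W :\ v) (T :\ v) (rst v g1) ->
    lcomp e (W :\ v) (T :\ v) (rst v h) = lcomp e (W :\ v) (T :\ v) (rst v h1) ->
    g v = h v -> g v \in ~: U.
  move=> g h gc hc Eg Eh gh.
  have Cg' : [set g t | t in T :\ v] = Cg.
    by apply: eq_in_imset => t tT; rewrite (lab_on gc g1c Eg).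
  have Ch' : [set h t | t in T :\ v] = Ch.
    by apply: eq_in_imset => t tT; rewrite (lab_on hc h1c Eh).
  have n1 := notinC cl vT gc; have n2 := notinC cl vT hc.
  rewrite Cg' in n1; rewrite Ch' -gh in n2.
  move: n1 n2; rewrite !inE !negb_or => /andP [-> ->] /andP [_ ->] //.
have gh1 : g1 v = h1 v by rewrite Hx // eq_sym.
have gh2 : g2 v = h2 v.
  by rewrite Hx2 //; move: uT2; rewrite !inE eq_sym => /andP [].
have i1 := nU _ _ g1c h1c erefl erefl gh1.
have i2 := nU _ _ g2c h2c E1 E2 gh2.
have cCg : #|Cg| = k - 2.
  rewrite card_in_imset ?cT // => x y; rewrite !inE => /andP [_ xT] /andP [_ yT].
  exact: col_inj g1c cl x y xT yT.
have hu : h1 u \notin Cg.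
  apply/imsetP => [[t tT E]]; move: (tT); rewrite !inE => /andP [tv tT'].
  case: (eqVneq t u) => [tu|tu]; first by move: Hu; rewrite E tu eqxx.
  move: E; rewrite Hx // => /(col_inj h1c cl uT' tT') ut.
  by rewrite ut eqxx in tu.
have sub : h1 u |: Cg \subset Cg :|: Ch.
  apply/subsetP => x; rewrite !inE => /orP [/eqP ->|->]; last by [].
  by apply/orP; right; apply/imsetP; exists u.
have nCh : None \notin Cg :|: Ch.
  by rewrite inE negb_or (NoneC v TW g1c) (NoneC v TW h1c).
have Hb : #|~: U| <= 1.
  move: (subset_leq_card sub) (cardsC U).
  rewrite /U cardsU1 hu cardsU1 nCh cCg card_option card_ord.
  move: #|Cg :|: Ch| #|~: (None |: (Cg :|: Ch))| => a b H1 H2.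
  by clear -H1 H2 hk; lia.
have /card_le1_eqP H := Hb; by have := H _ _ i1 i2.
Qed.

Theorem lemma8 (V : finType) (e : rel V) (k : nat) (W T : {set V}) (v : V) :
  3 <= k ->
  symmetric e -> irreflexive e ->
  l_connected e (k - 2) W ->
  (exists g : pcol V k, g \in colorings e k W) ->
  chordal e W ->
  is_clique e W T ->
  introduce e W T v ->
  (color_complete (CS_node e (W :\ v) (T :\ v)) (@CS_adj V k)
       (CS_lab (T :\ v)) (k - 2) ->
   color_complete (CS_node e W T) (@CS_adj V k) (CS_lab T) (k - 1)) /\
  (#|T| = k \/
   (forest (CS_node e (W :\ v) (T :\ v)) (@CS_adj V k) /\
    inj_nbhd (CS_node e (W :\ v) (T :\ v)) (@CS_adj V k) (CS_lab (T :\ v))) ->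
   forest (CS_node e W T) (@CS_adj V k) /\
   inj_nbhd (CS_node e W T) (@CS_adj V k) (CS_lab T)).
Proof.
move=> hk esym eirr lc gex ch cl intro.
split; first exact: part1.
have [g0 g0c] := gex.
move=> H; have [TW _] := cl; have [TneW vT Nv] := intro.
case: (eqVneq #|T| k) => [cT|cT].
  split.
    move=> [s [us ss ns cs]].
    case: s us ss ns cs => [|a [|b s']] //= us ss ns cs.
    have ab : CS_adj a b by move: cs; rewrite /cycle /= => /andP [].
    by move: ab; rewrite (negbTE (noadj hk cl cT (ns _ (mem_head _ _)) (ns b _))) // !inE eqxx orbT.
  move=> x y z nx ny nz axy.
  by move: axy; rewrite (negbTE (noadj hk cl cT nx ny)).
case: H => [cT'|[hf hi]]; first by rewrite cT' eqxx in cT.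
have c1 := card_T_ge eirr lc cl intro.
have c2 := card_T_le cl g0c.
have c3 := cardsD1 v T; rewrite vT in c3.
have cT' : #|T :\ v| = k - 2.
  move: (#|T :\ v|) (#|T|) c1 c2 c3 cT => a b H1 H2 H3 H4.
  by move/eqP: H4 => H4; clear -H1 H2 H3 H4 hk; lia.
split.
  apply: (@abstract_forest _ (CS_node e W T) (CS_node e (W :\ v) (T :\ v))
            (@CS_adj V k) (@CS_adj V k) (psi e W T v) _ (fun X => CS_lab T X v)) => //.
  - exact: CS_adj_sym.
  - exact: CS_adj_irr.
  - exact: CS_adj_sym.
  - exact: CS_adj_irr.
  - by move=> n; apply: conda.
  - by move=> n m nn nm; apply: condb.
  - by move=> n m nn nm; apply: condc.
  - by move=> n1 n2 n3; apply: cond3.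
  - by move=> n m n' m'; apply: condf.
apply: (@abstract_inj _ (CS_node e W T) (CS_node e (W :\ v) (T :\ v))
          (@CS_adj V k) (@CS_adj V k) (psi e W T v) _ (fun X => CS_lab T X v)
          _ _ (CS_lab T) (CS_lab (T :\ v))) => //.
- exact: CS_adj_irr.
- by move=> n m nn nm; apply: condb.
- by move=> n m nn nm; apply: condc.
- by move=> n m nn nm; apply: condd.
- by move=> n; apply: conda.
Qed.
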